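(* Let $d$ be a positive integer and let $\mu$ be a balanced isotropic Borel probability measure on $\mathbb{S}^{d-1}$. If $\langle x,y\rangle\ge-\frac1d$ for all $x,y$ in the support of $\mu$, then $\mu$ is the uniform distribution over the vertices of a regular simplex, i.e. $\mu=\frac{1}{d+1}\sum_{j=1}^{d+1}\delta_{v_j}$ for some unit vectors $v_1,\dots,v_{d+1}\in\mathbb{S}^{d-1}$ with $\langle v_i,v_j\rangle=-\frac1d$ for all $i\ne j$.
   Context: A Borel probability measure $\mu$ on $\mathbb{S}^{d-1}$ is isotropic if $\int\langle x,y\rangle^2\,d\mu(x)=\frac1d$ for every $y\in\mathbb{S}^{d-1}$, and balanced if $\int x\,d\mu(x)=0$. *)

(* Defs.v *)
From HB Require Import structures.
From mathcomp Require Import all_boot all_order all_algebra.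
From mathcomp Require Import all_classical all_reals all_analysis.
Set Implicit Arguments. Unset Strict Implicit. Unset Printing Implicit Defensive.
Import Order.TTheory GRing.Theory Num.Theory.
Import numFieldNormedType.Exports.
Local Open Scope ring_scope.
Local Open Scope classical_set_scope.

Definition borelRd (R : realType) (d : nat) :=
  g_sigma_algebraType (fun U : set 'rV[R]_d => open U).
Arguments borelRd : clear implicits.

Definition dotv (R : realType) (d : nat) (x y : 'rV[R]_d) : R :=
  \sum_(i < d) x 0 i * y 0 i.

Definition sphere (R : realType) (d : nat) : set (borelRd R d) :=
  [set x | dotv (x : 'rV[R]_d) x = 1].
Arguments sphere : clear implicits.

Definition msupport (R : realType) (d : nat)
  (mu : set (borelRd R d) -> \bar R) : set 'rV[R]_d :=
  [set x | forall U : set 'rV[R]_d, open U -> U x -> (0 < mu U)%E].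

(* mu is a Borel probability measure on S^{d-1}, i.e. concentrated on it *)
Definition on_sphere (R : realType) (d : nat) (mu : probability (borelRd R d) R) :=
  mu (sphere R d) = 1%E.

Definition isotropic (R : realType) (d : nat) (mu : probability (borelRd R d) R) :=
  forall y : 'rV[R]_d, dotv y y = 1 ->
    (\int[mu]_(x in sphere R d) ((dotv (x : 'rV[R]_d) y) ^+ 2)%:E = (d%:R^-1)%:E)%E.

Definition balanced (R : realType) (d : nat) (mu : probability (borelRd R d) R) :=
  forall i : 'I_d, (\int[mu]_(x in sphere R d) ((x : 'rV[R]_d) 0 i)%:E = 0)%E.

(* Main.v *)
Require Import Defs.
From HB Require Import structures.
From mathcomp Require Import all_boot all_order all_algebra.
From mathcomp Require Import all_classical all_reals all_analysis.
From mathcomp Require Import measurable_realfun.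
From mathcomp Require Import ring lra.
Import Order.TTheory GRing.Theory Num.Theory.
Import numFieldNormedType.Exports.
Local Open Scope ring_scope.
Local Open Scope classical_set_scope.
Section S.
Variables (R : realType) (d : nat).
Local Notation V := 'rV[R]_d.
Local Notation T := (borelRd R d).

Lemma mfun_cont (f : V -> R) : continuous f ->
  measurable_fun [set: T] (f : T -> R).
Proof.
move=> cf.
have := @measurability _ _ T R setT f _ (RGenOpens.measurableE R); apply.
move=> _ [_ [a [b ->] <-]]; rewrite setTI.
apply: sub_sigma_algebra.
by apply: (proj1 (continuousP f) cf); exact: interval_open.
Qed.

Lemma open_meas (U : set V) : open U -> measurable (U : set T).
Proof. by move=> oU; apply: sub_sigma_algebra. Qed.

Lemma cont_sum (I : Type) (s : seq I) (f : I -> V -> R) :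
  (forall i, continuous (f i)) -> continuous (fun z => \sum_(i <- s) f i z).
Proof.
move=> cf; elim: s => [|a s IH].
  under eq_fun do rewrite big_nil; exact: cst_continuous.
under eq_fun do rewrite big_cons.
move=> z; apply: continuousD; [exact: cf| exact: IH].
Qed.

Lemma cont_dotl (y : V) : continuous (fun z : V => dotv z y).
Proof.
rewrite /dotv; apply: cont_sum => i z.
apply: continuousM; [exact: coord_continuous | exact: cst_continuous].
Qed.

Lemma cont_dot2 : continuous (fun z : V => dotv z z).
Proof.
rewrite /dotv; apply: cont_sum => i z.
apply: continuousM; exact: coord_continuous.
Qed.

Lemma meas_sphere : measurable (sphere R d).
Proof.
have := @mfun_cont _ cont_dot2 measurableT _ (measurable_set1 1).
by rewrite setTI.
Qed.

Lemma open_of_nbhs (A : set V) : (forall x, A x -> nbhs x A) -> open A.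
Proof. by rewrite openE. Qed.

Section Supp.
Variable mu : {measure set T -> \bar R}.
Local Notation S := (msupport mu).

Lemma not_supp x : ~ S x -> exists U : set V, [/\ open U, U x & mu U = 0%E].
Proof.
move=> /existsNP[U /not_implyP[oU /not_implyP[Ux nmu]]].
exists U; split => //; apply/eqP; rewrite eq_le measure_ge0 andbT.
by rewrite leNgt; apply/negP.
Qed.

Lemma supp_compl_open : open (~` S : set V).
Proof.
apply: open_of_nbhs => x /not_supp[U [oU Ux mU]].
apply: (filterS _ (@open_nbhs_nbhs _ x U (conj oU Ux))).
by move=> z Uz Sz; have := Sz U oU Uz; rewrite mU ltxx.
Qed.

Definition cball (q : 'rV[rat]_d) (n : nat) : set V :=
  ball (map_mx (@ratr R) q : V) (n.+1%:R^-1 : R).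

Definition Fq (p : ('rV[rat]_d * nat)%type) : set T :=
  if `[< mu (cball p.1 p.2) = 0%E >] then cball p.1 p.2 else set0.

Definition Gq (n : nat) : set T :=
  if unpickle n is Some p then Fq p else set0.

Lemma Gq_negl n : mu.-negligible (Gq n).
Proof.
rewrite /Gq; case: (unpickle n) => [p|]; last by exists set0; split => //; exact: measure0.
rewrite /Fq; case: asboolP => [h|_]; last by exists set0; split => //; exact: measure0.
have mB : measurable (cball p.1 p.2 : set T) by apply: open_meas; exact: ball_open.
exact: (proj2 (negligibleP mu mB) h).
Qed.

Lemma supp_cover : (~` S : set T) `<=` \bigcup_n Gq n.
Proof.
move=> x /not_supp[U [oU Ux mU]].
have /nbhs_ballP[e e0 eU] := @open_nbhs_nbhs _ x U (conj oU Ux).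
have [n hn] : exists n : nat, n.+1%:R^-1 < e / 2 :> R.
  by have [k hk] := @ltr_add_invr R 0 (e / 2) (divr_gt0 e0 (ltr0Sn _ 1)); exists k; rewrite add0r in hk.
have /choice [qf hq] : forall i : 'I_d, exists qi : rat,
    @ratr R qi \in `](x 0 i - n.+1%:R^-1), (x 0 i + n.+1%:R^-1)[%R.
  move=> i; apply: rat_in_itvoo.
  by rewrite ltrBlDr -addrA ltrDl addr_gt0 // invr_gt0 ltr0Sn.
pose q : 'rV[rat]_d := \row_i qf i.
have xB : cball q n x.
  split; first by rewrite invr_gt0.
  move=> i j; rewrite (ord1 i) /ball /= !mxE.
  have := hq j; rewrite in_itv /= => /andP[h1 h2].
  rewrite distrC ltr_distlC h1 h2 //.
have BU : cball q n `<=` U.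
  move=> z [_ hz]; apply: eU; split => // i j.
  have := hz i j; have := xB.2 i j; rewrite /ball /= => h1 h2.
  rewrite (le_lt_trans (ler_distD ((map_mx (@ratr R) q : V) i j) _ _)) //.
  rewrite (splitr e) ltrD // (lt_trans _ hn) // distrC //.
have mB : mu (cball q n) = 0%E.
  apply/eqP; rewrite eq_le measure_ge0 andbT -mU; apply: le_measure; rewrite ?inE //.
  - apply: open_meas; exact: ball_open.
  - exact: open_meas.
exists (pickle (q, n)) => //; rewrite /Gq pickleK /Fq /=.
by case: asboolP.
Qed.

Lemma supp_null : mu (~` S) = 0%E.
Proof.
apply/negligibleP; first exact: open_meas supp_compl_open.
apply: negligibleS supp_cover _; exact: negligible_bigcup Gq_negl.
Qed.
End Supp.

Lemma dotvC (x y : V) : dotv x y = dotv y x.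
Proof. by apply: eq_bigr => i _; rewrite mulrC. Qed.
Lemma dotvDl (x y z : V) : dotv (x + y) z = dotv x z + dotv y z.
Proof. by rewrite /dotv -big_split; apply: eq_bigr => i _; rewrite !mxE mulrDl. Qed.
Lemma dotvZl (a : R) (x z : V) : dotv (a *: x) z = a * dotv x z.
Proof. by rewrite /dotv mulr_sumr; apply: eq_bigr => i _; rewrite !mxE mulrA. Qed.
Lemma dotvNl (x z : V) : dotv (- x) z = - dotv x z.
Proof. by rewrite -scaleN1r dotvZl mulN1r. Qed.
Lemma dotv0l (z : V) : dotv 0 z = 0.
Proof. by rewrite /dotv big1 // => i _; rewrite mxE mul0r. Qed.
Lemma dotvDr (x y z : V) : dotv z (x + y) = dotv z x + dotv z y.
Proof. by rewrite dotvC dotvDl !(dotvC z). Qed.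
Lemma dotvNr (x z : V) : dotv z (- x) = - dotv z x.
Proof. by rewrite dotvC dotvNl dotvC. Qed.
Lemma dotv_ge0 (x : V) : 0 <= dotv x x.
Proof. by apply: sumr_ge0 => i _; rewrite -expr2 sqr_ge0. Qed.
Lemma dotv_eq0 (x : V) : dotv x x = 0 -> x = 0.
Proof.
move=> /eqP; rewrite psumr_eq0 => [/allP h|i _]; last by rewrite -expr2 sqr_ge0.
apply/rowP => i; rewrite mxE; have := h i (mem_index_enum _).
by rewrite /= mulf_eq0 orbb => /eqP.
Qed.
Lemma dotv_sum (k : nat) (w : 'I_k -> V) (y : V) :
  dotv (\sum_(j < k) w j) y = \sum_(j < k) dotv (w j) y.
Proof.
elim/big_rec2: _ => [|j a b _ <-]; first exact: dotv0l.
by rewrite dotvDl.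
Qed.
Lemma dotv_sumr (k : nat) (w : 'I_k -> V) (y : V) :
  dotv y (\sum_(j < k) w j) = \sum_(j < k) dotv y (w j).
Proof. by rewrite dotvC dotv_sum; apply: eq_bigr => j _; rewrite dotvC. Qed.

Lemma dotv_sub (x y : V) :
  dotv (x - y) (x - y) = dotv x x - 2 * dotv x y + dotv y y.
Proof.
rewrite dotvDl !dotvDr !dotvNl !dotvNr opprK (dotvC y x); ring.
Qed.

Lemma dot_le1 (x y : V) : dotv x x = 1 -> dotv y y = 1 -> dotv x y <= 1.
Proof.
move=> hx hy; have := dotv_ge0 (x - y); rewrite dotv_sub hx hy => h; lra.
Qed.

Lemma dot_eq1 (x y : V) : dotv x x = 1 -> dotv y y = 1 -> dotv x y = 1 -> x = y.
Proof.
move=> hx hy hxy; apply/eqP; rewrite -subr_eq0; apply/eqP/dotv_eq0.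
rewrite dotv_sub hx hy hxy; ring.
Qed.

Lemma coord_le1 (x : V) i : dotv x x = 1 -> `|x 0 i| <= 1.
Proof.
move=> hx; have : x 0 i * x 0 i <= 1.
  rewrite -hx /dotv (bigD1 i) //= lerDl; apply: sumr_ge0 => j _.
  by rewrite -expr2 sqr_ge0.
move=> h; rewrite ler_norml; apply/andP; split; nra.
Qed.

Lemma dot_bound (z x : V) : dotv z z = 1 -> `|dotv z x| <= \sum_i `|x 0 i|.
Proof.
move=> hz; rewrite /dotv (le_trans (ler_norm_sum _ _ _)) //.
apply: ler_sum => i _; rewrite normrM ler_piMl //; exact: coord_le1.
Qed.

Section Integ.
Variable mu : probability T R.
Hypotheses (hS : on_sphere mu) (hB : balanced mu) (hI : isotropic mu).
Local Notation D := (sphere R d).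

Lemma intb (f : V -> R) (B : R) : continuous f ->
  (forall z, D z -> `|f z| <= B) -> mu.-integrable D (EFin \o (f : T -> R)).
Proof.
move=> cf hb; apply: measurable_bounded_integrable.
- exact: meas_sphere.
- exact: (le_lt_trans (probability_le1 mu meas_sphere) (ltry 1)).
- apply: measurable_funS (@mfun_cont f cf) => //.
- exists B; split; first exact: num_real.
  by move=> M BM z Dz; exact: le_trans (hb z Dz) (ltW BM).
Qed.

Lemma int_dot (y : V) : (\int[mu]_(z in D) (dotv (z : V) y)%:E = 0)%E.
Proof.
have mD := meas_sphere.
under eq_integral do rewrite /dotv -sumEFin.
rewrite integral_sum //; last first.
  move=> i; apply: (@intb (fun z : V => z 0 i * y 0 i) `|y 0 i|).
    by move=> z; apply: continuousM; [exact: coord_continuous|exact: cst_continuous].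
  by move=> z Dz; rewrite normrM ler_piMl // coord_le1.
rewrite big1 // => i _.
under eq_integral do rewrite mulrC EFinM.
rewrite integralZl //; last first.
  apply: (@intb (fun z : V => z 0 i) 1); first exact: coord_continuous.
  by move=> z Dz; exact: coord_le1.
by rewrite hB mule0.
Qed.

Lemma muD : (mu : {measure set T -> \bar R}) D = 1%E.
Proof. exact: hS. Qed.

Definition gfun (x z : V) : R := (dotv z x + d%:R^-1) * (1 - dotv z x).

Lemma cont_g x : continuous (gfun x).
Proof.
rewrite /gfun => z.
apply: (@continuousM _ _ (fun z : V => dotv z x + d%:R^-1) (fun z : V => 1 - dotv z x)).
  apply: (@continuousD _ _ _ (fun z : V => dotv z x) (fun _ => d%:R^-1)).
    exact: cont_dotl.
  exact: cst_continuous.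
apply: (@continuousD _ _ _ (fun _ : V => 1 : R) (fun z : V => - dotv z x)).
  exact: cst_continuous.
apply: continuousN; exact: cont_dotl.
Qed.

Lemma int_g (x : V) : dotv x x = 1 -> (\int[mu]_(z in D) (gfun x z)%:E = 0)%E.
Proof.
move=> hx; have mD := meas_sphere.
set B := \sum_i `|x 0 i|.
have tB : forall z, D z -> `|dotv z x| <= B by move=> z Dz; exact: dot_bound.
have it : mu.-integrable D (EFin \o (fun z : T => dotv (z : V) x)).
  by apply: (@intb _ B) => //; exact: cont_dotl.
have it2 : mu.-integrable D (EFin \o (fun z : T => (dotv (z : V) x) ^+ 2)).
  apply: (@intb _ (B ^+ 2)).
    move=> z; apply: (@continuousM _ _ (fun z : V => dotv z x) (fun z : V => dotv z x));
    exact: cont_dotl.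
  move=> z Dz; rewrite normrX lerXn2r ?nnegrE //; last exact: tB.
  by rewrite (le_trans _ (tB z Dz)).
have ic : mu.-integrable D (EFin \o (fun z : T => d%:R^-1 : R)).
  by apply: (@intb _ `|d%:R^-1|) => //; exact: cst_continuous.
transitivity (\int[mu]_(z in D) ((d%:R^-1 : R)%:E +
   ((1 - d%:R^-1)%:E * (dotv (z : V) x)%:E + (-1)%:E * ((dotv (z : V) x) ^+ 2)%:E)))%E.
  apply: eq_integral => z _; rewrite -!EFinM -!EFinD /gfun; congr (_%:E); ring.
have i1 : mu.-integrable D (fun z : T => (1 - d%:R^-1)%:E * (dotv (z : V) x)%:E)%E.
  by apply: integrableZl => //; exact: it.
have i2 : mu.-integrable D (fun z : T => (-1)%:E * ((dotv (z : V) x) ^+ 2)%:E)%E.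
  by apply: integrableZl => //; exact: it2.
rewrite integralD //; last exact: integrableD.
rewrite integralD //.
rewrite integralZl // integralZl // int_dot.
have := hI x hx => ->.
rewrite (_ : (fun z => (d%:R^-1)%:E) = cst (d%:R^-1)%:E) // integral_cst // muD.
rewrite mule0 add0e mule1 -EFinM -EFinD; congr (_%:E); ring.
Qed.

Hypothesis d_gt0 : (0 < d)%N.
Hypothesis hsupp : forall x y : V, msupport mu x -> msupport mu y ->
  - d%:R^-1 <= dotv x y.

Definition Pt (z : V) := msupport mu z /\ D z.

Lemma mgfun x : measurable_fun [set: T] (fun z : T => (gfun x z)%:E).
Proof. apply/measurable_EFinP; exact: (@mfun_cont _ (cont_g x)). Qed.

Lemma pairP x y : Pt x -> Pt y -> x = y \/ dotv x y = - d%:R^-1.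
Proof.
move=> [Sx Dx] [Sy Dy].
have hx : dotv x x = 1 := Dx.
have hy : dotv y y = 1 := Dy.
have mD := meas_sphere.
have g0 : forall z : V, msupport mu z -> D z -> 0 <= gfun x z.
  move=> z Sz Dz; apply: mulr_ge0.
    by rewrite -lerBlDr sub0r dotvC; exact: hsupp.
  by rewrite subr_ge0 dotvC; exact: dot_le1.
case: (eqVneq (gfun x y) 0) => [/eqP|gneq].
  rewrite /gfun mulf_eq0 => /orP[|].
    by rewrite addr_eq0 dotvC => /eqP h; right.
  by rewrite subr_eq0 eq_sym dotvC => /eqP h; left; exact: dot_eq1.
exfalso.
have gpos : 0 < gfun x y by rewrite lt_neqAle eq_sym gneq g0.
pose c := gfun x y / 2.
have c0 : 0 < c by rewrite divr_gt0.
pose U : set V := gfun x @^-1` `]c, gfun x y + 1[.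
have oU : open U.
  by apply: (proj1 (continuousP _) (cont_g x)); exact: interval_open.
have Uy : U y.
  by rewrite /U /= in_itv /= ltrDl ltr01 andbT /c ltr_pdivrMr // ltr_pMr // ltr1n.
have muU := Sy U oU Uy.
have mS : measurable (msupport mu : set T).
  rewrite -[msupport mu]setCK; apply: measurableC; apply: open_meas.
  exact: supp_compl_open.
have mU : measurable (U : set T) by exact: open_meas.
have mE : measurable (D `&` msupport mu : set T) by exact: measurableI.
have mEU : measurable (D `&` msupport mu `&` U : set T) by exact: measurableI.
have ig : mu.-integrable D (EFin \o (fun z : T => gfun x z)).
  apply: (@intb _ ((\sum_i `|x 0 i| + 1) ^+ 2)); first exact: cont_g.
  move=> z Dz; rewrite /gfun normrM expr2 ler_pM //.
    rewrite (le_trans (ler_normD _ _)) // lerD //; first exact: dot_bound.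
    by rewrite ger0_norm ?invr_ge0 // invf_le1 ?ltr0n // ler1n.
  rewrite (le_trans (ler_normB _ _)) // normr1 addrC lerD2r; exact: dot_bound.
have := int_g x hx.
rewrite (negligible_integral (N := (~` msupport mu : set T))) //; last first.
  - exact: supp_null.
  - by apply: open_meas; exact: supp_compl_open.
rewrite setDE setCK => hint.
have h1 : ((c%:E * mu (D `&` msupport mu `&` U)) <=
          \int[mu]_(z in D `&` msupport mu) (gfun x z)%:E)%E.
  apply: (@le_trans _ _ (\int[mu]_(z in D `&` msupport mu `&` U) (gfun x z)%:E)%E).
    rewrite -integral_cst //; apply: ge0_le_integral => //.
    - by move=> z _; rewrite lee_fin ltW.
    - exact: measurable_funS (mgfun x).
    - move=> z [_ Uz]; rewrite lee_fin; move: Uz; rewrite /U /= in_itv /=.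
      by move=> /andP[/ltW].
  apply: (ge0_subset_integral _ mEU mE).
  - exact: measurable_funS (mgfun x).
  - by move=> z [Dz Sz]; rewrite lee_fin; exact: g0.
  - exact: subIsetl.
have h2 : mu (D `&` msupport mu `&` U) = mu U.
  have nD : mu (~` D) = 0%E.
    rewrite probability_setC //.
    have -> : mu D = 1%E by exact: hS.
    by rewrite subee.
  have nDS : mu (~` D `|` ~` msupport mu : set T) = 0%E.
    apply: null_set_setU => //; [exact: measurableC|exact: measurableC|exact: supp_null].
  rewrite [RHS](measureDI _ mU mE).
  rewrite (@subset_measure0 _ _ _ _ (U `\` (D `&` msupport mu) : set T) (~` D `|` ~` msupport mu : set T)) //.
  - by rewrite add0e setIC.
  - exact: measurableD.
  - by apply: measurableU; exact: measurableC.
  - by move=> z [_ /not_andP[h|h]]; [left|right].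
move: h1; rewrite hint h2 => h1.
have : (0 < c%:E * mu U)%E by rewrite mule_gt0 // lte_fin.
by rewrite ltNge h1.
Qed.

Lemma meas_set1 (a : V) : measurable ([set a] : set T).
Proof.
rewrite -[[set a]]setCK; apply: measurableC; apply: open_meas.
apply: closed_openC; apply: accessible_closed_set1.
apply: hausdorff_accessible; exact: norm_hausdorff.
Qed.

Lemma muC_D : mu (~` D) = 0%E.
Proof.
rewrite probability_setC //; last exact: meas_sphere.
have -> : mu D = 1%E by exact: hS.
by rewrite subee.
Qed.

Section Fin.
Variables (k : nat) (w : 'I_k -> V).
Hypotheses (winj : injective w) (wP : forall j, Pt (w j))
  (wcov : forall z, Pt z -> exists j, z = w j).

Lemma P_big : (D `&` msupport mu : set T) =
  \big[setU/set0]_(j <- index_enum 'I_k) ([set w j] : set T).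
Proof.
rewrite -bigcup_seq; apply/seteqP; split.
- move=> z [Dz Sz]; have [j ->] := wcov z (conj Sz Dz).
  by exists j => //=; rewrite mem_index_enum.
- by move=> z [j _ ->]; have [? ?] := wP j; split.
Qed.

Lemma int_fin (f : T -> R) : mu.-integrable D (EFin \o f) ->
  (\int[mu]_(z in D) (f z)%:E =
   \sum_(j < k) (f (w j))%:E * mu ([set w j] : set T))%E.
Proof.
move=> intf; have mD := meas_sphere.
have mS : measurable (~` msupport mu : set T).
  by apply: open_meas; exact: supp_compl_open.
rewrite (negligible_integral (N := (~` msupport mu : set T))) //; last exact: supp_null.
rewrite setDE setCK P_big integral_bigsetU_EFin //.
- apply: eq_bigr => j _.
  rewrite (eq_integral (fun _ => (f (w j))%:E)); last by move=> z; rewrite inE => ->.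
  by rewrite integral_cst //; exact: meas_set1.
- by move=> j; exact: meas_set1.
- exact: index_enum_uniq.
- move=> i j _ _ [z [/= -> h]]; exact: winj.
- apply: (measurable_funS mD _ (measurable_int _ intf)).
  by rewrite -P_big; exact: subIsetl.
Qed.

Lemma dw j l : dotv (w j) (w l) = (1 + d%:R^-1) * (j == l)%:R - d%:R^-1.
Proof.
case: eqVneq => [->|jl].
  by rewrite mulr1 (wP l).2 addrK.
case: (@pairP (w j) (w l) (wP j) (wP l)) => [/winj /eqP|->]; first by rewrite (negbTE jl).
by rewrite mulr0 sub0r.
Qed.

Lemma mfin j : mu ([set w j] : set T) = (fine (mu ([set w j] : set T)))%:E.
Proof.
rewrite fineK // ge0_fin_numE ?measure_ge0 //.
by rewrite (le_lt_trans (probability_le1 mu (meas_set1 (w j)))) // ltry.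
Qed.

Local Notation m j := (fine (mu ([set w j] : set T))).

Lemma sum_m : \sum_(j < k) m j = 1.
Proof.
have ih : mu.-integrable D (EFin \o (fun _ : T => 1 : R)).
  apply: (@intb (fun _ => 1) 1); first exact: cst_continuous.
  by move=> z _; rewrite normr1.
have h := int_fin _ ih.
rewrite integral_cst in h; last exact: meas_sphere.
rewrite muD mul1e in h.
have e : (\sum_(j < k) (m j)%:E = (\sum_(j < k) m j)%:E)%E by exact: sumEFin.
have : ((\sum_(j < k) m j)%:E = 1%:E)%E.
  rewrite -e h; apply: eq_bigr => j _; rewrite mul1e; exact/esym/mfin.
by case.
Qed.
Lemma m_val i : m i = (d.+1%:R)^-1.
Proof.
have ih : mu.-integrable D (EFin \o (fun z : T => dotv (z : V) (w i))).
  apply: (@intb _ (\sum_l `|w i 0 l|)); first exact: cont_dotl.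
  by move=> z Dz; exact: dot_bound.
have h := int_fin _ ih.
rewrite int_dot in h.
have e : (\sum_(j < k) (dotv (w j) (w i) * m j)%:E =
          (\sum_(j < k) dotv (w j) (w i) * m j)%:E)%E by exact: sumEFin.
have : ((\sum_(j < k) dotv (w j) (w i) * m j)%:E = 0%:E)%E.
  rewrite -e [RHS]h; apply: eq_bigr => j _; rewrite EFinM -mfin //.
case => hs.
pose u := d%:R^-1 : R.
rewrite (eq_bigr (fun j => (1 + u) * ((j == i)%:R * m j) - u * m j)) in hs; last first.
  by move=> j _; rewrite dw; rewrite /u; ring.
rewrite sumrB -!mulr_sumr sum_m (bigD1 i) //= eqxx mul1r big1 ?addr0 in hs; last first.
  by move=> j /negbTE ->; rewrite mul0r.
have hd : d%:R != 0 :> R by rewrite pnatr_eq0 -lt0n.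
have hd1 : (d%:R + 1) != 0 :> R by rewrite natr1 pnatr_eq0.
have hu : 1 + u != 0.
  by rewrite gt_eqF // addr_gt0 // /u invr_gt0 ltr0n.
move/eqP: hs; rewrite mulr1 subr_eq0 => /eqP hs.
have -> : m i = ((1 + u) * m i) / (1 + u) by field.
by rewrite hs /u -natr1; field; rewrite hd hd1.
Qed.

Lemma k_val : k = d.+1.
Proof.
have := sum_m; rewrite (eq_bigr (fun _ => (d.+1%:R)^-1)); last by move=> j _; exact: m_val.
rewrite sumr_const card_ord -(mulr_natr (d.+1%:R^-1) k) => h.
have hd1 : d.+1%:R != 0 :> R by rewrite pnatr_eq0.
have : k%:R = d.+1%:R :> R.
  by move: h => /(congr1 (fun x => d.+1%:R * x)); rewrite mulrA mulfV // mul1r mulr1.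
by move/eqP; rewrite eqr_nat => /eqP.
Qed.

Lemma mu_formula (A : set T) : measurable A ->
  mu A = (\sum_(j < k) ((d.+1)%:R^-1)%:E * \d_(w j : T) A)%E.
Proof.
move=> mA; have mD := meas_sphere.
have ih : mu.-integrable D (EFin \o (\1_A : T -> R)).
  apply: measurable_bounded_integrable => //.
  - exact: (le_lt_trans (probability_le1 mu mD) (ltry 1)).
  - exists 1; split; first exact: num_real.
    move=> M M1 z _; rewrite /= indicE (le_trans _ (ltW M1)) //.
    by case: (z \in A); rewrite ?normr1 ?normr0.
have h := int_fin _ ih.
rewrite integral_indic // in h.
have -> : mu A = mu (A `&` D).
  rewrite (measureDI _ mA mD).
  rewrite (@subset_measure0 _ _ _ _ (A `\` D) (~` D)) ?add0e //.
  all: try exact: measurableD.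
  all: try exact: measurableC.
  all: try exact: muC_D.
  all: try by move=> z [].
rewrite h; apply: eq_bigr => j _.
by rewrite mfin m_val diracE indicE muleC -EFinM mulrC.
Qed.
End Fin.

Lemma card_bound k (w : 'I_k -> V) : injective w -> (forall j, Pt (w j)) ->
  (k <= d.+1)%N.
Proof.
move=> winj wP.
pose u := d%:R^-1 : R.
have dw : forall j l, dotv (w j) (w l) = (1 + u) * (j == l)%:R - u.
  move=> j l; case: eqVneq => [->|jl].
    by rewrite mulr1 (wP l).2 addrK.
  case: (@pairP (w j) (w l) (wP j) (wP l)) => [/winj /eqP|->].
    by rewrite (negbTE jl).
  by rewrite mulr0 sub0r.
have inner : forall j, \sum_(l < k) dotv (w j) (w l) = (1 + u) - k%:R * u.
  move=> j; rewrite (eq_bigr _ (fun l _ => dw j l)) sumrB -mulr_sumr.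
  rewrite (bigD1 j) //= eqxx big1 ?addr0 ?mulr1; last by move=> l /negbTE; rewrite eq_sym => ->.
  by rewrite sumr_const card_ord -(mulr_natl u k).
have := dotv_ge0 (\sum_(j < k) w j).
rewrite dotv_sum (eq_bigr _ (fun j _ => (etrans (dotv_sumr _ w (w j)) (inner j)))).
rewrite sumr_const card_ord -(mulr_natr _ k) => h.
rewrite leqNgt; apply/negP => hk.
have u0 : 0 < u by rewrite invr_gt0 ltr0n.
have du : d%:R * u = 1 by rewrite mulfV // pnatr_eq0 -lt0n.
have hK : d%:R + 2 <= k%:R :> R.
  by rewrite -natrD ler_nat addn2.
have h1 : 1 + 2 * u <= k%:R * u.
  have := ler_wpM2r (ltW u0) hK; rewrite mulrDl du => h'.
  by rewrite (le_trans _ h') // mulrC.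
have K0 : 0 < k%:R :> R by rewrite ltr0n (leq_ltn_trans _ hk).
nra.
Qed.

Lemma exists_family : exists k (w : 'I_k -> V),
  [/\ injective w, forall j, Pt (w j) & forall z, Pt z -> exists j, z = w j].
Proof.
pose Pk := fun k => `[< exists w : 'I_k -> V, injective w /\ forall j, Pt (w j) >].
have ex0 : exists k, Pk k.
  exists 0%N; apply/asboolP; exists (fun _ => 0); split; first by move=> [].
  by move=> [].
have ub : forall k, Pk k -> (k <= d.+1)%N.
  by move=> k /asboolP[w [winj wP]]; exact: (@card_bound k w winj wP).
case: (ex_maxnP ex0 ub) => k /asboolP[w [winj wP]] kmax.
exists k, w; split => // z Pz; apply: contrapT => ncov.
pose w' (j : 'I_k.+1) := if unlift ord_max j is Some j' then w j' else z.
have : Pk k.+1.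
  apply/asboolP; exists w'; split.
    move=> i1 i2; rewrite /w'.
    case: (unliftP ord_max i1) => [j1 ->|->]; case: (unliftP ord_max i2) => [j2 ->|->] //.
    - by move=> /winj ->.
    - by move=> h; exfalso; apply: ncov; exists j1; rewrite h.
    - by move=> h; exfalso; apply: ncov; exists j2.
  by move=> j; rewrite /w'; case: (unliftP ord_max j).
by move/kmax; rewrite ltnn.
Qed.

Lemma main_sec : exists v : 'I_d.+1 -> V,
    (forall j, dotv (v j) (v j) = 1) /\
    (forall i j, i != j -> dotv (v i) (v j) = - d%:R^-1) /\
    (forall A : set T, measurable A ->
       mu A = ((d.+1)%:R^-1)%:E * (\sum_(j < d.+1) \d_(v j : T) A))%E.
Proof.
have [k [w [winj wP wcov]]] := exists_family.
have ek := @k_val k w winj wP wcov.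
have hmu := @mu_formula k w winj wP wcov.
subst k.
exists w; split; [|split].
- by move=> j; exact: (wP j).2.
- move=> i j ij; case: (@pairP (w i) (w j) (wP i) (wP j)) => // /winj /eqP.
  by rewrite (negbTE ij).
- by move=> A mA; rewrite hmu // ge0_sume_distrr.
Qed.
End Integ.
End S.

Theorem theorem5p5 (R : realType) (d : nat) (d_gt0 : (0 < d)%N)
  (mu : probability (borelRd R d) R) :
  on_sphere mu -> balanced mu -> isotropic mu ->
  (forall x y : 'rV[R]_d, msupport mu x -> msupport mu y ->
     - d%:R^-1 <= dotv x y) ->
  exists v : 'I_d.+1 -> 'rV[R]_d,
    (forall j, dotv (v j) (v j) = 1) /\
    (forall i j, i != j -> dotv (v i) (v j) = - d%:R^-1) /\
    (forall A : set (borelRd R d), measurable A ->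
       mu A = ((d.+1)%:R^-1)%:E * (\sum_(j < d.+1) \d_(v j : borelRd R d) A))%E.
Proof.
move=> hS hB hI hsupp.
exact: (@main_sec R d mu hS hB hI d_gt0 hsupp).
Qed.
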